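(* Let $1\le t\le n$, write $n=at+b$ with $a\ge1$ and $0\le b<t$, and let $\mathfrak p=(x_{i_1},\ldots,x_{i_a})$ with $1\le i_1<\cdots<i_a\le n$. Then $\mathfrak p\in\mathrm{Ass}(S/I_t(L_n))$ if and only if (1) $(j-1)t+b+1\le i_j\le jt$ for all $1\le j\le a$, and (2) $i_{j+1}-i_j\le t$ for all $1\le j\le a-1$.
   Context: $K$ is a field, $S=K[x_1,\ldots,x_n]$, $I_t(L_n)=(u_1,\ldots,u_{n-t+1})$ with $u_i=x_ix_{i+1}\cdots x_{i+t-1}$. *)

(* Defs.v *)
From HB Require Import structures.
From mathcomp Require Import all_boot all_algebra.
From mathcomp Require Import mpoly.
Unset Printing Implicit Defensive.
Import GRing.Theory.
Local Open Scope ring_scope.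

(* S = K[x_1,...,x_n] is {mpoly K[n]}; the variable x_k (1 <= k <= n, 1-based)
   is 'X_(k-1); out-of-range indices give 0 (never used in the statement). *)
Definition var (K : fieldType) (n k : nat) : {mpoly K[n]} :=
  match @insub _ (fun m => m < n)%N 'I_n k.-1 with
  | Some i => 'X_i
  | None => 0
  end.

Definition ideal_gen (K : fieldType) (n : nat) (gs : seq {mpoly K[n]})
    (f : {mpoly K[n]}) : Prop :=
  exists cs : seq {mpoly K[n]},
    size cs = size gs /\ f = \sum_(j < size gs) cs`_j * gs`_j.

Definition u_gen (K : fieldType) (n t i : nat) : {mpoly K[n]} :=
  \prod_(i <= k < i + t) var K n k.

Definition ItLn (K : fieldType) (n t : nat) : {mpoly K[n]} -> Prop :=
  @ideal_gen K n [seq u_gen K n t i | i <- iota 1 (n - t + 1)].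

Definition Ass (K : fieldType) (n : nat) (I P : {mpoly K[n]} -> Prop) : Prop :=
  exists f : {mpoly K[n]}, forall g : {mpoly K[n]}, I (g * f) <-> P g.

(* Main.v *)
Require Import Defs.
From HB Require Import structures.
From mathcomp Require Import all_boot all_algebra.
From mathcomp Require Import mpoly.
From mathcomp Require Import zify ring.

Section C.
Variables (n t a b : nat) (i : nat -> nat).
Hypotheses (Ht : 1 <= t <= n) (Hn : n = a * t + b) (Ha : 1 <= a) (Hb : b < t)
  (Hi1 : 1 <= i 1) (Hia : i a <= n) (Hinc : forall j, 1 <= j < a -> i j < i j.+1).

Lemma mono {p q} : 1 <= p -> p <= q -> q <= a -> i p <= i q.
Proof.
move=> Hp; elim: q => [|q IH] Hpq Hq; first lia.
case: (ltngtP p q.+1) => [lt|gt|->] //; last lia.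
have := Hinc q; have := IH (ltnSE lt); lia.
Qed.

Lemma smono {p q} : 1 <= p -> p < q -> q <= a -> i p < i q.
Proof.
move=> Hp Hpq Hq.
have := Hinc q.-1; have e : q.-1.+1 = q by lia. rewrite e.
have := @mono p q.-1 Hp; lia.
Qed.

Lemma range {j} : 1 <= j <= a -> 1 <= i j <= n.
Proof.
move=> /andP [h1 h2]; have := mono (leqnn 1) h1 h2; have := mono h1 h2 (leqnn a); lia.
Qed.

Definition cover := forall k, 1 <= k <= n - t + 1 -> exists2 j, 1 <= j <= a & k <= i j < k + t.

Lemma cover_gap : cover -> forall j, 1 <= j <= a - 1 -> i j.+1 - i j <= t.
Proof.
move=> C j Hj; case: (leqP (i j.+1 - i j) t) => // Hgt.
have r1 : 1 <= j.+1 <= a by lia.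
have r2 : 1 <= j <= a by lia.
have := range r1; have := range r2; have := Hinc j => h0 h1 h2.
have hk : 1 <= (i j).+1 <= n - t + 1 by lia.
have [j' Hj' Hk] := C _ hk.
case: (leqP j' j) => le.
  have := @mono j' j; lia.
have := @mono j.+1 j'; lia.
Qed.

Lemma cover_up : cover -> forall j, 1 <= j <= a -> i j <= j * t.
Proof.
move=> C; elim => [|j IH] //.
case: j IH => [|j] IH Hj.
  have hk : 1 <= 1 <= n - t + 1 by lia.
  have [j' Hj' Hk] := C _ hk.
  have := @mono 1 j'; lia.
have h1 : 1 <= j.+1 <= a - 1 by lia.
have := cover_gap C _ h1; have := IH (_ : _); have := Hinc j.+1.
rewrite mulSn; lia.
Qed.

Lemma cover_low : cover -> forall d, d < a -> (a - d - 1) * t + b + 1 <= i (a - d).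
Proof.
move=> C; elim => [|d IH] Hd.
  have hk : 1 <= n - t + 1 <= n - t + 1 by lia.
  have [j' Hj' Hk] := C _ hk.
  have := @mono j' a. rewrite !subn0.
  have e : (a - 1) * t + t = a * t by rewrite addnC -mulSn; congr muln; lia.
  lia.
have h1 : 1 <= a - d.+1 <= a - 1 by lia.
have := cover_gap C _ h1.
have e1 : (a - d.+1).+1 = a - d by lia. rewrite e1.
have := IH (ltnW Hd). have := Hinc (a - d.+1).
have e : (a - d.+1 - 1) * t + t = (a - d - 1) * t by rewrite addnC -mulSn; congr muln; lia.
lia.
Qed.

Definition conds := (forall j, 1 <= j <= a -> (j - 1) * t + b + 1 <= i j <= j * t) /\
   (forall j, 1 <= j <= a - 1 -> i j.+1 - i j <= t).

Lemma conds_cover : conds -> cover.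
Proof.
move=> [C1 C2].
have P : forall j, 1 <= j <= a -> forall k, 1 <= k <= i j ->
    exists2 j', 1 <= j' <= a & k <= i j' < k + t.
  elim => [|j IH] //; case: j IH => [|j] IH Hj k Hk.
    have h : 1 <= 1 <= a by lia.
    exists 1 => //; have := C1 1 h; lia.
  case: (leqP k (i j.+1)) => hk.
    by apply: IH => //; lia.
  have h2 : 1 <= j.+1 <= a - 1 by lia.
  have := C2 j.+1 h2; have h : 1 <= j.+2 <= a by lia.
  exists j.+2 => //; lia.
move=> k Hk; apply: (P a) => //; first lia.
have ha : 1 <= a <= a by lia.
have := C1 a ha.
have e : (a - 1) * t + t = a * t by rewrite addnC -mulSn; congr muln; lia.
lia.
Qed.

Lemma conds_window : conds -> forall j, 1 <= j <= a -> exists k,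
  [/\ 1 <= k, k + t <= n + 1, k <= i j < k + t &
   forall j', 1 <= j' <= a -> k <= i j' < k + t -> j' = j].
Proof.
move=> [C1 C2] j Hj.
have [prev [P1 P2 P3]] : exists prev, [/\ prev < i j,
    forall j', 1 <= j' < j -> i j' <= prev & prev + t <= j * t].
  case: j Hj => [|[|j0]] Hj //.
    exists 0; split; first by have := range Hj; lia.
      by move=> j' hj'; lia.
    by rewrite mul1n.
  have h0 : 1 <= j0.+1 <= a by lia.
  have h1 : 0 < j0.+1 < a by lia.
  exists (i j0.+1); split; first exact: Hinc.
    by move=> j' hj'; apply: mono; lia.
  have := C1 _ h0; rewrite subSS subn0 [j0.+2 * t]mulSn; lia.
have [next [N1 N2 N3 N4]] : exists next, [/\ i j < next, next <= n + 1,
    forall j', j < j' <= a -> next <= i j' & j * t + b + 1 <= next].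
  case: (ltngtP j a) => ha; last 1 first.
  - exists (n + 1); split => //; first by have := range Hj; lia.
      by move=> j'; lia.
    by rewrite ha; lia.
  - have h0 : 1 <= j.+1 <= a by lia.
    have h1 : 0 < j < a by lia.
    exists (i j.+1); split; first exact: Hinc.
    + by have := range h0; lia.
    + by move=> j' hj'; apply: mono; lia.
    have := C1 _ h0; rewrite subSS subn0; lia.
  - lia.
exists (maxn (prev + 1) (i j + 1 - t)); split.
- lia.
- lia.
- lia.
move=> j' Hj' Hk.
case: (ltngtP j' j) => // c.
  have := P2 j'; lia.
have := N3 j'; lia.
Qed.

Lemma cover_conds : cover -> conds.
Proof.
move=> C; split; last exact: cover_gap.
move=> j Hj; rewrite cover_up // andbT.
have hd : a - j < a by lia.
have := cover_low C _ hd; have e : a - (a - j) = j by lia.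
by rewrite e.
Qed.

End C.
Local Open Scope ring_scope.
Import GRing.Theory.

Section S.
Variables (K : fieldType) (n : nat).
Implicit Types (gs : seq {mpoly K[n]}) (f g : {mpoly K[n]}).

Lemma ideal0 gs : ideal_gen _ _ gs 0.
Proof.
exists (nseq (size gs) 0); rewrite size_nseq; split=> //.
by rewrite big1 // => j _; rewrite nth_nseq if_same mul0r.
Qed.

Lemma idealD gs f g : ideal_gen _ _ gs f -> ideal_gen _ _ gs g -> ideal_gen _ _ gs (f + g).
Proof.
move=> [c1 [s1 ->]] [c2 [s2 ->]].
exists [seq c1`_j + c2`_j | j <- iota 0 (size gs)].
rewrite size_map size_iota; split=> //.
rewrite -big_split /=; apply: eq_bigr => j _.
by rewrite (nth_map 0%N) ?size_iota // nth_iota // mulrDl.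
Qed.

Lemma idealM gs f g : ideal_gen _ _ gs g -> ideal_gen _ _ gs (f * g).
Proof.
move=> [c [s ->]].
exists [seq f * c`_j | j <- iota 0 (size gs)].
rewrite size_map size_iota; split=> //.
rewrite mulr_sumr; apply: eq_bigr => j _.
by rewrite (nth_map 0%N) ?size_iota // nth_iota // mulrA.
Qed.

Lemma idealG gs g : g \in gs -> ideal_gen _ _ gs g.
Proof.
move=> gin.
exists ([seq (j == index g gs)%:R | j <- iota 0 (size gs)] : seq {mpoly K[n]}).
rewrite size_map size_iota; split=> //.
have hi : (index g gs < size gs)%N by rewrite index_mem.
rewrite (bigD1 (Ordinal hi)) //= big1 ?addr0.
  by rewrite (nth_map 0%N) ?size_iota ?index_mem // nth_iota ?index_mem // eqxx mul1r nth_index.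
move=> j /eqP ne; rewrite (nth_map 0%N) ?size_iota // nth_iota //.
case: eqP => [e|_]; last by rewrite mul0r.
by case: ne; apply: val_inj.
Qed.

Lemma idealSum gs (I : Type) (r : seq I) (F : I -> {mpoly K[n]}) :
  (forall x, ideal_gen _ _ gs (F x)) -> ideal_gen _ _ gs (\sum_(x <- r) F x).
Proof.
move=> H; elim: r => [|x r IH]; first by rewrite big_nil; apply: ideal0.
by rewrite big_cons; apply: idealD.
Qed.

Lemma ideal_morph gs (phi : {rmorphism {mpoly K[n]} -> {mpoly K[n]}}) g :
  (forall h, h \in gs -> phi h = 0) -> ideal_gen _ _ gs g -> phi g = 0.
Proof.
move=> H [c [_ ->]]; rewrite rmorph_sum big1 // => j _.
by rewrite rmorphM (H gs`_j) ?mulr0 //; apply: mem_nth; case: j.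
Qed.
End S.
Section S2.
Variables (K : fieldType) (n : nat) (l : seq nat).

Definition hh (k : 'I_n) : {mpoly K[n]} := if (k.+1 \in l) then 0 else 'X_k.
Definition phi : {rmorphism {mpoly K[n]} -> {mpoly K[n]}} := mmap (mpolyC n (R:=K)) hh.

Lemma phiX k : phi 'X_k = hh k.
Proof. by rewrite /phi /= mmapX mmap1U. Qed.

Lemma varE (k : 'I_n) : var K n k.+1 = 'X_k.
Proof. by rewrite /var /= insubT //= => H; congr mpolyX; apply/val_inj. Qed.

Lemma var_out m : (n < m)%N -> var K n m = 0.
Proof.
move=> H; rewrite /var insubF //; apply/negbTE; rewrite -leqNgt; case: m H => //.
Qed.

Lemma phi_var m : (1 <= m)%N -> phi (var K n m) = if m \in l then 0 else var K n m.
Proof.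
move=> H1; case: (leqP m n) => [H2|H]; last first.
  by rewrite var_out // rmorph0 if_same.
have hm : (m.-1 < n)%N by case: m H1 H2.
have -> : m = (Ordinal hm).+1 by rewrite /= prednK.
by rewrite varE phiX.
Qed.
End S2.
Section S3.
Variables (K : fieldType) (n : nat) (l : seq nat).

Lemma decompX (m : 'X_{1..n}) :
  ideal_gen _ _ [seq var K n x | x <- l] ('X_[m] - phi K n l 'X_[m]).
Proof.
rewrite /phi /= mmapX /mmap1.
case: (pickP (fun i : 'I_n => (0 < m i)%N && (i.+1 \in l))) => [i /andP [mi il]|H].
  rewrite (bigD1 i) //= /hh il expr0n gtn_eqF // mul0r subr0.
  have le : (U_(i) <= m)%MM by apply/mnm_lepP => j; rewrite mnm1E; case: eqP => // <-.
  rewrite -(submK le) mpolyXD; apply: idealM; apply: idealG.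
  by rewrite -varE; apply: map_f.
rewrite (eq_bigr (fun i => 'X_i ^+ m i)) ?mpolyXE_id ?subrr; first exact: ideal0.
move=> i _; have := H i; rewrite /hh; case: (m i) => [|k] /=; first by rewrite !expr0.
by move=> ->.
Qed.

Lemma decomp g : ideal_gen _ _ [seq var K n x | x <- l] (g - phi K n l g).
Proof.
have E := mpolyE g; set s := (\sum_(_ <- _) _) in E.
rewrite {1 2}E /s (raddf_sum (phi K n l)) -sumrB; apply: idealSum => m.
rewrite /phi /= mmapZ -mul_mpolyC -mulrBr; apply: idealM.
have := decompX m; rewrite /phi /=.
by rewrite mmapX.

Qed.

Lemma ideal_phi g : (forall x, x \in l -> (1 <= x)%N) ->
  ideal_gen _ _ [seq var K n x | x <- l] g -> phi K n l g = 0.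
Proof.
move=> Hl; apply: ideal_morph => h /mapP [x xl ->].
by rewrite phi_var ?Hl // xl.
Qed.

Lemma phi_ideal g : phi K n l g = 0 -> ideal_gen _ _ [seq var K n x | x <- l] g.
Proof. by move=> H; have := decomp g; rewrite H subr0. Qed.
End S3.
Section S4.
Variables (K : fieldType) (n t : nat) (l : seq nat).
Hypothesis Hl : forall x, x \in l -> (1 <= x)%N.

Lemma var_nz m : (1 <= m <= n)%N -> var K n m != 0.
Proof.
move=> /andP [h1 h2]; have hm : (m.-1 < n)%N by case: m h1 h2.
have -> : m = (Ordinal hm).+1 by rewrite /= prednK.
rewrite varE; apply/eqP => H; have := congr1 (mcoeff U_(Ordinal hm)) H.
by rewrite mcoeffX eqxx mcoeff0 => /eqP; rewrite oner_eq0.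
Qed.

Lemma phi_u0 k : (1 <= k)%N -> (exists2 x, x \in l & (k <= x < k + t)%N) ->
  phi K n l (u_gen K n t k) = 0.
Proof.
move=> hk [x xl hx]; rewrite /u_gen rmorph_prod (big_rem x) ?mem_index_iota //=.
by rewrite phi_var ?Hl // xl mul0r.
Qed.

Lemma phi_u_nz k : (1 <= k)%N -> (k + t <= n + 1)%N ->
  (forall x, x \in l -> ~~ (k <= x < k + t)%N) -> phi K n l (u_gen K n t k) != 0.
Proof.
move=> hk hkt H; rewrite /u_gen rmorph_prod prodf_seq_neq0; apply/allP => m.
rewrite mem_index_iota => hm /=; rewrite phi_var; last lia.
case: ifP => [ml|_]; first by have := H m ml; rewrite hm.
apply: var_nz; lia.
Qed.

Definition FF := \prod_(1 <= m < n.+1 | m \notin l) var K n m.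

Lemma phiF : phi K n l FF = FF.
Proof.
rewrite /FF rmorph_prod big_seq_cond [RHS]big_seq_cond; apply: eq_bigr => m /andP [].
by rewrite mem_index_iota => hm /negbTE ml; rewrite phi_var ?ml //; lia.
Qed.

Lemma FF_nz : FF != 0.
Proof.
rewrite /FF prodf_seq_neq0; apply/allP => m; rewrite mem_index_iota => hm.
by apply/implyP => _; apply: var_nz; lia.
Qed.

Lemma varF x k : x \in l -> (1 <= k)%N -> (k + t <= n + 1)%N -> (k <= x < k + t)%N ->
  (forall y, y \in l -> (k <= y < k + t)%N -> y = x) ->
  exists r, var K n x * FF = r * u_gen K n t k.
Proof.
move=> xl hk hkt hx H.
rewrite /FF (@big_cat_nat _ _ _ k) //; last lia.
rewrite (@big_cat_nat _ _ _ (k + t) k) //; last lia.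
set A := \prod_(1 <= _ < k | _) _; set B := \prod_(k <= _ < k + t | _) _.
set C := \prod_(k + t <= _ < n.+1 | _) _.
exists (A * C).
have -> : u_gen K n t k = var K n x * B.
  rewrite /u_gen (bigID (fun m => m \in l)) /=; congr (_ * _).
  rewrite (big_rem x) ?mem_index_iota // xl big1_seq; first by rewrite Monoid.mulm1.
  move=> m /andP [ml].
  rewrite mem_rem_uniq ?iota_uniq // inE => /andP [/eqP ne]; rewrite mem_index_iota => hm.
  by case: ne; apply: H.
rewrite /=; ring.
by rewrite leq_addr.
Qed.
End S4.

Theorem lemma3p3 (K : fieldType) (n t a b : nat) (i : nat -> nat) :
  (1 <= t <= n)%N -> n = (a * t + b)%N -> (1 <= a)%N -> (b < t)%N ->
  (1 <= i 1)%N -> (i a <= n)%N ->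
  (forall j, (1 <= j < a)%N -> (i j < i j.+1)%N) ->
  @Ass K n (ItLn K n t) (@ideal_gen K n [seq var K n (i j) | j <- iota 1 a])
  <->
  ((forall j, (1 <= j <= a)%N -> ((j - 1) * t + b + 1 <= i j <= j * t)%N) /\
   (forall j, (1 <= j <= a - 1)%N -> (i j.+1 - i j <= t)%N)).
Proof.
move=> Ht Hn Ha Hb Hi1 Hia Hinc.
set l := [seq i j | j <- iota 1 a].
have -> : [seq var K n (i j) | j <- iota 1 a] = [seq var K n x | x <- l].
  by rewrite /l -map_comp.
have memL : forall x, x \in l -> exists2 j, (1 <= j <= a)%N & x = i j.
  move=> x /mapP [j]; rewrite mem_iota => hj ->; exists j => //; lia.
have memL' : forall j, (1 <= j <= a)%N -> i j \in l.
  by move=> j hj; apply: map_f; rewrite mem_iota; lia.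
have Hl : forall x, x \in l -> (1 <= x)%N.
  move=> x /memL [j hj ->]; have := @range n t a b i Ht Hn Ha Hb Hi1 Hia Hinc j hj; lia.
have genI : forall k, (1 <= k <= n - t + 1)%N -> ItLn K n t (u_gen K n t k).
  move=> k hk; apply: idealG; apply: map_f; rewrite mem_iota; lia.
split.
- move=> [f Hf]; apply: (@cover_conds n t a b i Ht Hn Ha Hb Hi1 Hia Hinc) => k Hk.
  have Pu : ideal_gen K n [seq var K n x | x <- l] (u_gen K n t k).
    by apply/Hf; rewrite mulrC; apply: idealM; apply: genI.
  have H0 := @ideal_phi K n l _ Hl Pu.
  case: (boolP (has (fun x => k <= x < k + t)%N l)) => [/hasP [x xl hx]|/hasPn hn].
    by have [j hj ex] := memL x xl; exists j => //; rewrite -ex.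
  have h1 : (1 <= k)%N by lia.
  have h2 : (k + t <= n + 1)%N by lia.
  by have := @phi_u_nz K n t l k h1 h2 hn; rewrite H0 eqxx.
- move=> Hc; exists (FF K n l) => g; split.
  + move=> Hg; apply: phi_ideal.
    have : phi K n l (g * FF K n l) = 0.
      apply: ideal_morph Hg => h /mapP [k]; rewrite mem_iota => hk ->.
      have hk' : (1 <= k <= n - t + 1)%N by lia.
      have [j hj hw] := @conds_cover n t a b i Ht Hn Ha Hb Hi1 Hia Hc k hk'.
      apply: phi_u0 => //; first lia.
      by exists (i j) => //; apply: memL'.
    rewrite rmorphM phiF => /eqP; rewrite mulf_eq0 (negbTE (FF_nz _ _ _)) orbF.
    by move/eqP.
  + move=> [cs [hs ->]]; rewrite mulr_suml; apply: idealSum => j.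
    rewrite -mulrA; apply: idealM.
    have hj : (j < size l)%N by case: j => /= j; rewrite size_map.
    rewrite (nth_map 0%N) //.
    have xl := mem_nth 0%N hj; set x := nth 0%N l j in xl *.
    have [j0 hj0 ->] := memL x xl.
    have [k [k1 k2 k3 k4]] := @conds_window n t a b i Ht Hn Ha Hb Hi1 Hia Hinc Hc j0 hj0.
    have k5 : forall y, y \in l -> (k <= y < k + t)%N -> y = i j0.
      by move=> y /memL [j' hj' ->] hw; rewrite (k4 j' hj' hw).
    have [r ->] := @varF K n t l _ k (memL' _ hj0) k1 k2 k3 k5.
    apply: idealM; apply: genI; lia.
Qed.
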